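(* Let $L>1$ be a constant and $\mathcal S$ a set of relations. Then $|\Join_{S\in\mathcal S}S| = O(\mathrm{IN}^{\mathsf{DBP}(\mathcal S,L)})$.
   Context: A join query consists of a finite set $\mathcal S$ of relations; each $S$ is a finite set of tuples over attribute set $\mathsf{attr}(S)$; $\mathcal A=\bigcup_S\mathsf{attr}(S)$; the join $\Join_{S\in\mathcal S}S$ is the set of tuples $t$ over $\mathcal A$ with $\pi_{\mathsf{attr}(S)}(t)\in S$ for all $S$. $\mathrm{IN}=\sum_S|S|\ge2$, $\log=\log_{\mathrm{IN}}$. For $A\subseteq\mathsf{attr}(S)$, $v\in\pi_A(S)$: $\mathsf{deg}(v,S,A)=|\{t\in S:\pi_A(t)=v\}|$; $d_{S,A}=\max_{v\in\pi_A(S)}\mathsf{deg}(v,S,A)$ for $A\ne\emptyset$, $d_{S,\emptyset}=|S|$. DBP: a cover is a set $C$ of pairs $(S,A)$ with $S\in\mathcal S$, $A\subseteq\mathsf{attr}(S)$, $\bigcup_{(S,A)\in C}A=\mathcal A$. For a cover $C$, $O_{C,L}$ is the optimal value of: minimize $\sum_{a\in\mathcal A}v_a$ over real $v_a\ge0$ subject to $\sum_{a\in A'}v_a\ge\log\big(d_{\pi_A(S),A\setminus A'}/L\big)$ for all $(S,A)\in C$, $A'\subseteq A$. $\mathsf{DBP}(\mathcal S,L)=\min_C O_{C,L}$. $O(\cdot)$ hides factors depending only on the query schema and on $L$. *)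

(* Defs.v *)
From Stdlib Require Import Reals ClassicalEpsilon.
From mathcomp Require Import all_boot.

Set Implicit Arguments.
Unset Strict Implicit.
Unset Printing Implicit Defensive.

Definition is_glbR (E : R -> Prop) (m : R) : Prop :=
  (forall x, E x -> Rle m x) /\
  (forall b, (forall x, E x -> Rle b x) -> Rle b m).

(* The greatest lower bound of E (chosen classically; 0 if it does not exist).
   When E has a minimum, Rinf E is that minimum. *)
Definition Rinf (E : R -> Prop) : R :=
  epsilon (inhabits R0) (fun m => is_glbR E m).

(* Attributes form a finType A, values a finType V.  A tuple over an attribute
   set X is encoded as t : {ffun A -> option V} with t a <> None iff a \in X. *)

Section Rel.
Variables (A V : finType).

Definition tup := {ffun A -> option V}.

Definition proj (X : {set A}) (t : tup) : tup :=
  [ffun a => if a \in X then t a else None].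

Definition projrel (X : {set A}) (T : {set tup}) : {set tup} :=
  [set proj X t | t in T].

Definition deg (v : tup) (T : {set tup}) (X : {set A}) : nat :=
  #|[set t in T | proj X t == v]|.

Definition dmax (T : {set tup}) (X : {set A}) : nat :=
  if X == set0 then #|T| else \max_(v in projrel X T) deg v T X.

End Rel.

Section Query.
Variables (A I V : finType) (attr : I -> {set A}) (Rl : I -> {set tup A V}).

Definition well_formed : Prop :=
  forall i t, t \in Rl i -> forall a, (t a != None) = (a \in attr i).

Definition join : {set tup A V} :=
  [set t : tup A V | [forall a, t a != None] &&
                     [forall i, proj (attr i) t \in Rl i]].

Definition IN : nat := \sum_(i : I) #|Rl i|.

Definition logIN (x : R) : R := Rdiv (ln x) (ln (INR IN)).

Definition is_cover (C : {set I * {set A}}) : Prop :=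
  (forall p, p \in C -> p.2 \subset attr p.1) /\
  \bigcup_(p in C) p.2 = [set: A].

Definition sumR (X : {set A}) (v : A -> R) : R := \big[Rplus/R0]_(a in X) v a.

Definition feasible (C : {set I * {set A}}) (L : R) (v : A -> R) : Prop :=
  (forall a, Rle R0 (v a)) /\
  (forall p, p \in C -> forall X' : {set A}, X' \subset p.2 ->
     Rle (logIN (Rdiv (INR (dmax (projrel p.2 (Rl p.1)) (p.2 :\: X'))) L))
         (sumR X' v)).

Definition O_CL (C : {set I * {set A}}) (L : R) : R :=
  Rinf (fun x => exists v, feasible C L v /\ x = sumR [set: A] v).

Definition DBP (L : R) : R :=
  Rinf (fun x => exists C, is_cover C /\ x = O_CL C L).

End Query.

(* Main.v *)
Require Import Defs.
From Stdlib Require Import Reals Lra ClassicalEpsilon.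
From HB Require Import structures.
From mathcomp Require Import all_boot.
Set Implicit Arguments. Unset Strict Implicit. Unset Printing Implicit Defensive.

Section Comb.
Variables (A I V : finType) (attr : I -> {set A}) (Rl : I -> {set tup A V}).

Lemma proj_proj (X Y : {set A}) (t : tup A V) : proj X (proj Y t) = proj (X :&: Y) t.
Proof. apply/ffunP => a; rewrite !ffunE inE; by case: (a \in X); case: (a \in Y). Qed.

Lemma proj_setT (t : tup A V) : proj setT t = t.
Proof. by apply/ffunP => a; rewrite !ffunE inE. Qed.

Lemma deg_le_dmax (w : tup A V) T X : (deg w T X <= dmax T X)%N.
Proof.
rewrite /dmax /deg; case: ifP => _.
  by apply: subset_leq_card; apply/subsetP => t; rewrite inE => /andP[].
case: (boolP (w \in projrel X T)) => hw.
  exact: (leq_bigmax_cond _ hw).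
suff -> : [set t in T | proj X t == w] = set0 by rewrite cards0.
apply/setP => t; rewrite !inE; apply/negP => /andP[tT /eqP e].
have : w \in projrel X T by rewrite /projrel; apply/imsetP; exists t.
by rewrite (negbTE hw).
Qed.

Definition J U := projrel U (join attr Rl).

Lemma step (U B : {set A}) i : B \subset attr i ->
  (#|J (B :|: U)| <= #|J U| * dmax (projrel B (Rl i)) (B :&: U))%N.
Proof.
move=> sB.
set D := J (B :|: U).
set d := dmax _ _.
rewrite -sum1_card (partition_big_imset (proj U)) /=.
apply: (@leq_trans (\sum_(j in proj U @: D) d)).
  apply: leq_sum => y _.
  rewrite sum1_card.
  set F := [pred x in D | proj U x == y].
  have inj : {in F &, injective (proj B)}.
    move=> x x' /andP[/imsetP[t _ ->] /eqP e1] /andP[/imsetP[t' _ ->] /eqP e2] eB.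
    rewrite -e2 in e1.
    apply/ffunP => a.
    have := congr1 (fun f : tup A V => f a) e1; have := congr1 (fun f : tup A V => f a) eB.
    rewrite !ffunE !inE; by case: (a \in B); case: (a \in U).
  rewrite -(card_in_imset inj).
  apply: (leq_trans _ (deg_le_dmax (proj B y) _ _)).
  apply: subset_leq_card; apply/subsetP => z /imsetP[x /andP[/imsetP[t tj ->] /eqP ey] ->].
  rewrite inE; apply/andP; split.
    rewrite /projrel; apply/imsetP; exists (proj (attr i) t).
      by move: tj; rewrite inE => /andP[_ /forallP]; apply.
    rewrite !proj_proj; congr proj; apply/setP => a; rewrite !inE.
    by case: (boolP (a \in B)) => //= /(subsetP sB) ->.
  rewrite -ey !proj_proj; apply/eqP; congr proj; apply/setP => a; rewrite !inE.
  by case: (a \in U); case: (a \in B).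
rewrite sum_nat_const leq_mul2r; apply/orP; right.
apply: subset_leq_card; apply/subsetP => y /imsetP[x /imsetP[t tj ->] ->].
apply/imsetP; exists t => //; rewrite proj_proj; congr proj.
by apply/setP => a; rewrite !inE; case: (a \in U); case: (a \in B).
Qed.
End Comb.


Local Open Scope R_scope.
HB.instance Definition _ := Monoid.isComLaw.Build R R0 Rplus (fun x y z => esym (Rplus_assoc x y z)) Rplus_comm Rplus_0_l.

Lemma ln_le_0 (x : R) : (x <= 1 -> ln x <= 0)%R.
Proof.
move=> h; case: (Rle_lt_dec x 0) => h0.
  rewrite /ln; case: (Rlt_dec 0 x) => //= hh; [exfalso; lra|lra].
case: (Rle_lt_or_eq_dec _ _ h) => h1.
  by rewrite -ln_1; left; apply: ln_increasing.
by rewrite h1 ln_1; right.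
Qed.

Section Real.
Variables (A I V : finType) (attr : I -> {set A}) (Rl : I -> {set tup A V}).
Variables (C : {set I * {set A}}) (L : R) (v : A -> R).
Hypotheses (hL : (1 < L)%R) (h2 : (2 <= IN Rl)%N) (hf : feasible Rl C L v)
  (hc : forall p, p \in C -> p.2 \subset attr p.1).

Lemma INpos : (1 < INR (IN Rl))%R.
Proof. apply: (Rlt_le_trans _ 2); first lra. by apply: (le_INR 2); apply/leP. Qed.

Lemma lnIN : (0 < ln (INR (IN Rl)))%R.
Proof. rewrite -ln_1; apply: ln_increasing; [lra| exact: INpos]. Qed.

Lemma dbound p (X' : {set A}) : p \in C -> X' \subset p.2 ->
  (INR (dmax (projrel p.2 (Rl p.1)) (p.2 :\: X')) <= L * Rpower (INR (IN Rl)) (sumR X' v))%R.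
Proof.
move=> pC sX; have [_ hf2] := hf; have := hf2 p pC X' sX.
set x := INR _; set s := sumR _ _ => hle.
have hRp : (0 < Rpower (INR (IN Rl)) s)%R by rewrite /Rpower; apply: exp_pos.
have x0 : (0 <= x)%R by apply: pos_INR.
case: (Rle_lt_or_eq_dec _ _ x0) => hx; last first.
  rewrite -hx; apply: Rlt_le; apply: Rmult_lt_0_compat => //; lra.
have hxL : (0 < x / L)%R by apply: Rdiv_lt_0_compat => //; lra.
move: hle; rewrite /logIN => hle.
have hln : (ln (x / L) <= s * ln (INR (IN Rl)))%R.
  have := lnIN => hI.
  apply: (Rmult_le_reg_r (/ ln (INR (IN Rl)))); first by apply: Rinv_0_lt_compat.
  rewrite Rmult_assoc Rinv_r; last lra. by rewrite Rmult_1_r.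
have : (x / L <= Rpower (INR (IN Rl)) s)%R.
  rewrite /Rpower -(exp_ln (x / L)) //.
  case: (Rle_lt_or_eq_dec _ _ hln) => h; [left; exact: exp_increasing| by rewrite h; right].
move=> h; apply: (Rmult_le_reg_l (/ L)); first by apply: Rinv_0_lt_compat; lra.
rewrite -Rmult_assoc Rinv_l; last lra. rewrite Rmult_1_l Rmult_comm; exact: h.
Qed.

Lemma sumR_split (U B : {set A}) : sumR (B :|: U) v = sumR U v + sumR (B :\: U) v.
Proof.
rewrite /sumR (big_setID U); congr (_ + _); apply: eq_bigl => a; rewrite !inE;
  by case: (a \in U); case: (a \in B).
Qed.

Lemma J0 : (#|J attr Rl set0| <= 1)%N.
Proof.
rewrite -(cards1 ([ffun => None] : tup A V)); apply: subset_leq_card.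
apply/subsetP => x /imsetP[t _ ->]; rewrite inE; apply/eqP/ffunP => a.
by rewrite !ffunE inE.
Qed.

Lemma count_bound (s : seq (I * {set A})) : all (mem C) s ->
  INR #|J attr Rl (\bigcup_(p <- s) p.2)| <=
  L ^ size s * Rpower (INR (IN Rl)) (sumR (\bigcup_(p <- s) p.2) v).
Proof.
elim: s => [|p s IH] /=.
  move=> _; rewrite big_nil /sumR big_set0 Rpower_O; last by have := INpos; lra.
  rewrite Rmult_1_l; apply: (le_INR _ 1); apply/leP; exact: J0.
move=> /andP[pC /IH {}IH]; rewrite big_cons.
set U := \bigcup_(p <- s) p.2 in IH *.
have st := step Rl U (hc pC).
have db := dbound (X' := p.2 :\: U) pC (subsetDl _ _).
have e : p.2 :\: (p.2 :\: U) = p.2 :&: U.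
  by apply/setP => a; rewrite !inE; case: (a \in U); case: (a \in p.2).
rewrite e in db.
move: db; set d := dmax _ _ => db.
apply: (Rle_trans _ (INR (#|J attr Rl U| * d)%N)); first by apply: le_INR; apply/leP.
rewrite mult_INR sumR_split Rpower_plus.
have := pos_INR d; have := pos_INR #|J attr Rl U| => h1 h3.
replace (L * L ^ size s * (Rpower (INR (IN Rl)) (sumR U v) * Rpower (INR (IN Rl)) (sumR (p.2 :\: U) v)))
  with ((L ^ size s * Rpower (INR (IN Rl)) (sumR U v)) * (L * Rpower (INR (IN Rl)) (sumR (p.2 :\: U) v))) by ring.
apply: Rmult_le_compat => //.
Qed.

End Real.

Local Open Scope R_scope.

Lemma Rinf_spec (E : R -> Prop) b x0 : E x0 -> (forall x, E x -> b <= x) ->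
  is_glbR E (Rinf E) /\ b <= Rinf E.
Proof.
move=> Ex0 hb.
have [m [hm1 hm2]] : {m | is_lub (fun y => E (- y)) m}.
  apply: completeness; last by exists (- x0); rewrite Ropp_involutive.
  exists (- b) => y Ey; have := hb _ Ey; lra.
have g : is_glbR E (- m).
  split.
    move=> x Ex; have := hm1 (- x); rewrite Ropp_involutive => h; have := h Ex; lra.
  move=> c hc; have : m <= - c.
    apply: hm2 => y Ey; have := hc _ Ey; lra.
  lra.
have gs : is_glbR E (Rinf E) by apply: (epsilon_spec (inhabits R0) (fun m => is_glbR E m)); exists (- m).
split => //; case: gs => _; apply; exact: hb.
Qed.

Lemma ln_le (x y : R) : 0 < x -> x <= y -> ln x <= ln y.
Proof.
move=> hx h; case: (Rle_lt_or_eq_dec _ _ h) => h1.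
  by left; apply: ln_increasing.
by rewrite h1; right.
Qed.

Lemma sumR1 (A : finType) (X : {set A}) : sumR X (fun _ => 1) = INR #|X|.
Proof.
rewrite -sum1_card /sumR (big_morph INR plus_INR (erefl (INR 0))) //.
Qed.

Section Q.
Variables (A I V : finType) (attr : I -> {set A}) (Rl : I -> {set tup A V}).

Lemma dmax_le_card (T : {set tup A V}) X : (dmax T X <= #|T|)%N.
Proof.
rewrite /dmax; case: ifP => // _; apply/bigmax_leqP => w _.
by apply: subset_leq_card; apply/subsetP => t; rewrite inE => /andP[].
Qed.

Lemma card_le_IN i : (#|Rl i| <= IN Rl)%N.
Proof. by rewrite /IN (bigD1 i) //= leq_addr. Qed.

Lemma dmax_self (X : {set A}) i : (dmax (projrel X (Rl i)) X <= 1)%N.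
Proof.
have fix1 : forall t, t \in projrel X (Rl i) -> proj X t = t.
  by move=> t /imsetP[u _ ->]; rewrite proj_proj setIid.
rewrite /dmax; case: ifP => [/eqP X0|_].
  rewrite -(cards1 ([ffun => None] : tup A V)); apply: subset_leq_card.
  apply/subsetP => t tT; rewrite inE -(fix1 _ tT) X0; apply/eqP/ffunP => a.
  by rewrite !ffunE inE.
apply/bigmax_leqP => w _; rewrite -(cards1 w); apply: subset_leq_card.
apply/subsetP => t; rewrite !inE => /andP[tT /eqP <-]; by rewrite fix1.
Qed.

Lemma feas1 (C : {set I * {set A}}) L : (1 < L) -> (2 <= IN Rl)%N ->
  (forall p, p \in C -> p.2 \subset attr p.1) -> feasible Rl C L (fun _ => 1).
Proof.
move=> hL h2 hc; split => [a|p pC X' sX]; first lra.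
have hI := lnIN h2.
have hIN := INpos h2.
set d := dmax _ _.
have d0 : 0 <= INR d by apply: pos_INR.
have key : forall y, y <= 1 -> logIN Rl y <= 0.
  move=> y hy; rewrite /logIN /Rdiv.
  have := ln_le_0 hy => h; have : 0 < / ln (INR (IN Rl)) by apply: Rinv_0_lt_compat.
  nra.
rewrite sumR1.
case: (boolP (X' == set0)) => [/eqP X0|Xn].
  rewrite X0 cards0 /=; apply: key.
  rewrite /d X0 setD0.
  have : INR (dmax (projrel p.2 (Rl p.1)) p.2) <= 1 by apply: (le_INR _ 1); apply/leP; exact: dmax_self.
  move=> h; apply: (Rle_trans _ (INR (dmax (projrel p.2 (Rl p.1)) p.2))).
    rewrite /Rdiv -{2}(Rmult_1_r (INR _)); apply: Rmult_le_compat_l; first exact: pos_INR.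
    rewrite -Rinv_1; apply: Rinv_le_contravar; lra.
  exact: h.
have h1 : 1 <= INR #|X'|.
  apply: (le_INR 1); apply/leP; rewrite card_gt0; exact: Xn.
apply: (Rle_trans _ 1) => //.
case: (Rle_lt_dec (INR d / L) 1) => hy; first by have := key _ hy; lra.
rewrite /logIN /Rdiv; apply: (Rmult_le_reg_r (ln (INR (IN Rl)))) => //.
rewrite Rmult_assoc Rinv_l; last lra. rewrite Rmult_1_r Rmult_1_l.
apply: ln_le; first lra.
have : INR d <= INR (IN Rl).
  apply: le_INR; apply/leP; apply: (leq_trans (dmax_le_card _ _)).
  apply: (leq_trans (leq_imset_card _ _)); exact: card_le_IN.
have : INR d * / L <= INR d.
  rewrite -{2}(Rmult_1_r (INR _)); apply: Rmult_le_compat_l => //.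
  rewrite -Rinv_1; apply: Rinv_le_contravar; lra.
lra.
Qed.
End Q.

Lemma main_prop (A I : finType) (attr : I -> {set A})
  (hcov : \bigcup_(i : I) attr i = [set: A])
  (L : R) (hL : Rlt R1 L) :
  exists c : R, forall (V : finType) (Rl : I -> {set tup A V}),
    well_formed attr Rl ->
    (2 <= IN Rl)%N ->
    Rle (INR #|join attr Rl|)
        (Rmult c (Rpower (INR (IN Rl)) (DBP attr Rl L))).
Proof.
set N := #|{: (I * {set A})%type}|.
exists (L ^ N) => V Rl _ h2.
have cpos : 0 < L ^ N by apply: pow_lt; lra.
have hI := lnIN h2.
have hIN := INpos h2.
have Rppos : forall x, 0 < Rpower (INR (IN Rl)) x by move=> x; apply: exp_pos.
set j := INR #|join attr Rl|.
have j0 : 0 <= j by apply: pos_INR.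
case: (Rle_lt_or_eq_dec _ _ j0) => hj; last first.
  rewrite -hj; apply: Rlt_le; apply: Rmult_lt_0_compat => //.
set b := ln (j / L ^ N) / ln (INR (IN Rl)).
have hjc : 0 < j / L ^ N by apply: Rdiv_lt_0_compat.
have bnd : forall C v, is_cover attr C -> feasible Rl C L v -> b <= sumR [set: A] v.
  move=> C v [hc hU] hf.
  have cb := count_bound hL h2 hf hc (s := enum C).
  have : all (mem C) (enum C) by apply/allP => x; rewrite mem_enum.
  move=> /cb {cb}; rewrite big_enum /= hU.
  have -> : J attr Rl [set: A] = join attr Rl.
    apply/setP => t; apply/imsetP/idP => [[u uj ->]|tj]; first by rewrite proj_setT.
    by exists t; rewrite ?proj_setT.
  move=> cb.
  have hp : L ^ size (enum C) <= L ^ N.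
    apply: Rle_pow; first lra. apply/leP; rewrite -cardE; exact: max_card.
  have : j <= L ^ N * Rpower (INR (IN Rl)) (sumR [set: A] v).
    apply: (Rle_trans _ _ _ cb); apply: Rmult_le_compat_r; [left; exact: Rppos| exact: hp].
  move=> h.
  have h' : j / L ^ N <= Rpower (INR (IN Rl)) (sumR [set: A] v).
    apply: (Rmult_le_reg_l (L ^ N)) => //.
    rewrite /Rdiv -Rmult_assoc (Rmult_comm _ j) Rmult_assoc Rinv_r; lra.
  have := ln_le hjc h'; rewrite /Rpower ln_exp => hl.
  rewrite /b /Rdiv; apply: (Rmult_le_reg_r (ln (INR (IN Rl)))) => //.
  rewrite Rmult_assoc Rinv_l; lra.
have bO : forall C, is_cover attr C -> b <= O_CL Rl C L.
  move=> C hC; have [hc _] := hC.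
  have e1 : exists v, feasible Rl C L v /\ sumR [set: A] (fun _ => 1) = sumR [set: A] v.
    by exists (fun _ => 1); split => //; exact: (feas1 hL h2 hc).
  have [_ h] := @Rinf_spec (fun x => exists v, feasible Rl C L v /\ x = sumR [set: A] v) b
    (sumR [set: A] (fun _ => 1)) e1 (fun x '(ex_intro v (conj hv e)) => eq_ind_r _ (bnd C v hC hv) e).
  exact: h.
have C0 : is_cover attr [set (i, attr i) | i : I].
  split.
    by move=> p /imsetP[i _ ->].
  apply/setP => a; rewrite inE.
  have : a \in \bigcup_(i : I) attr i by rewrite hcov inE.
  move=> /bigcupP[i _ ai]; apply/bigcupP; exists (i, attr i) => //.
  by apply/imsetP; exists i.
have bD : b <= DBP attr Rl L.
  have e1 : exists C, is_cover attr C /\ O_CL Rl [set (i, attr i) | i : I] L = O_CL Rl C L.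
    by exists [set (i, attr i) | i : I].
  have [_ h] := @Rinf_spec (fun x => exists C, is_cover attr C /\ x = O_CL Rl C L) b
    (O_CL Rl [set (i, attr i) | i : I] L) e1 (fun x '(ex_intro C (conj hC e)) => eq_ind_r _ (bO C hC) e).
  exact: h.
have : Rpower (INR (IN Rl)) b = j / L ^ N.
  rewrite /Rpower /b /Rdiv Rmult_assoc Rinv_l; last lra.
  by rewrite Rmult_1_r exp_ln.
move=> e.
have := Rle_Rpower _ _ _ (Rlt_le _ _ hIN) bD; rewrite e => h.
apply: (Rmult_le_reg_l (/ L ^ N)); first exact: Rinv_0_lt_compat.
rewrite -Rmult_assoc Rinv_l; last lra.
by rewrite Rmult_1_l Rmult_comm.
Qed.

Local Close Scope R_scope.

Theorem proposition5p1 (A I : finType) (attr : I -> {set A})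
  (hcov : \bigcup_(i : I) attr i = [set: A])
  (L : R) (hL : Rlt R1 L) :
  exists c : R, forall (V : finType) (Rl : I -> {set tup A V}),
    well_formed attr Rl ->
    (2 <= IN Rl)%N ->
    Rle (INR #|join attr Rl|)
        (Rmult c (Rpower (INR (IN Rl)) (DBP attr Rl L))).
Proof. exact: main_prop. Qed.
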